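(* Let $X,Y\in M_n$ with entries in $\mathbb R$ or $\mathbb C$. Then $Y$ is a $\circ$-pseudoinverse of $X$ if and only if $\phi(Y)$ is a pseudoinverse of $\phi(X)$ among matrices in $S_{n+1}$; and $Y$ is the $\circ$-Moore–Penrose inverse of $X$ if and only if $\phi(Y)$ satisfies the four Moore–Penrose conditions for $\phi(X)$. In particular, the Moore–Penrose inverse $\phi(X)^+$ of $\phi(X)$ lies in $S_{n+1}$ and equals $\phi(X^\oplus)$, where $X^\oplus$ is the $\circ$-Moore–Penrose inverse of $X$.
   Context: Matrices are over $F=\mathbb R$ or $\mathbb C$; $A^*$ denotes conjugate transpose. $M_n$ is the set of $n\times n$ matrices over $F$; $S_{n}$ is the set of $n\times n$ matrices all of whose row sums and column sums are zero. $\mathbf 1$ is the all-ones column vector, $J_n:=[I_n\mid -\mathbf 1]$ (an $n\times(n+1)$ matrix), $K_n:=J_nJ_n^*$, and $\phi(X):=J_n^*XJ_n$. The twisted product on $M_n$ is $X\circ Y:=XK_nY$. A pseudoinverse of a matrix $A$ is any $B$ with $ABA=A$; the Moore–Penrose inverse $A^+$ is the unique $B$ with $ABA=A$, $BAB=B$, $(AB)^*=AB$, $(BA)^*=BA$. A $\circ$-pseudoinverse of $X\in M_n$ is any $Y\in M_n$ with $X\circ Y\circ X=X$; a $\circ$-Moore–Penrose inverse of $X$ is a $Y\in M_n$ with $X\circ Y\circ X=X$, $Y\circ X\circ Y=Y$, $(X\circ Y)^*=X\circ Y$, $(Y\circ X)^*=Y\circ X$. *)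

(* Defs.v *)
From HB Require Import structures.
From mathcomp Require Import all_boot all_order all_algebra.
Set Implicit Arguments. Unset Strict Implicit. Unset Printing Implicit Defensive.
Import Order.TTheory GRing.Theory Num.Theory.
Local Open Scope ring_scope.

(* All definitions are parametrised by the scalar conjugation [c : F -> F]:
   for F = C it is complex conjugation (Num.conj / x^* ), for F = R it is the
   identity.  [adj c A] is the conjugate transpose A^*. *)
Section Defs.
Variable F : fieldType.
Variable c : F -> F.

Definition adj (m p : nat) (A : 'M[F]_(m, p)) : 'M[F]_(p, m) := map_mx c A^T.

Definition inS (m : nat) (A : 'M[F]_m) : Prop :=
  (forall i, \sum_j A i j = 0) /\ (forall j, \sum_i A i j = 0).

Definition Jmx (n : nat) : 'M[F]_(n, n + 1) :=
  row_mx (1%:M) (- const_mx 1).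

Definition Kmx (n : nat) : 'M[F]_n := Jmx n *m adj (Jmx n).

Definition phi (n : nat) (X : 'M[F]_n) : 'M[F]_(n + 1) :=
  adj (Jmx n) *m X *m Jmx n.

Definition twprod (n : nat) (X Y : 'M[F]_n) : 'M[F]_n := X *m Kmx n *m Y.

Definition is_pinv (m : nat) (A B : 'M[F]_m) : Prop := A *m B *m A = A.

Definition is_MP (m : nat) (A B : 'M[F]_m) : Prop :=
  [/\ A *m B *m A = A, B *m A *m B = B,
      adj (A *m B) = A *m B & adj (B *m A) = B *m A].

Definition is_circ_pinv (n : nat) (X Y : 'M[F]_n) : Prop :=
  twprod (twprod X Y) X = X.

Definition is_circ_MP (n : nat) (X Y : 'M[F]_n) : Prop :=
  [/\ twprod (twprod X Y) X = X, twprod (twprod Y X) Y = Y,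
      adj (twprod X Y) = twprod X Y & adj (twprod Y X) = twprod Y X].
End Defs.

(* Main.v *)
Require Import Defs.
From HB Require Import structures.
From mathcomp Require Import all_boot all_order all_algebra.
Set Implicit Arguments. Unset Strict Implicit. Unset Printing Implicit Defensive.
Import Order.TTheory GRing.Theory Num.Theory.
Local Open Scope ring_scope.

Section Gen.
Variable F : numFieldType.
Variable c : {rmorphism F -> F}.
Hypothesis cK : involutive c.
Hypothesis cnorm : forall x : F, x * c x = `|x| ^+ 2.

Notation adj := (adj c).

Lemma adjM m p q (A : 'M[F]_(m, p)) (B : 'M[F]_(p, q)) :
  adj (A *m B) = adj B *m adj A.
Proof. by rewrite /Defs.adj trmx_mul map_mxM. Qed.

Lemma adjK m p (A : 'M[F]_(m, p)) : adj (adj A) = A.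
Proof. by apply/matrixP=> i j; rewrite /Defs.adj !mxE cK. Qed.

Lemma adj_inv m (A : 'M[F]_m) : adj (invmx A) = invmx (adj A).
Proof. by rewrite /Defs.adj trmx_inv map_invmx. Qed.

Lemma adj_rank m p (A : 'M[F]_(m, p)) : \rank (adj A) = \rank A.
Proof. by rewrite /Defs.adj mxrank_map mxrank_tr. Qed.

Lemma WWadj0 k p (W : 'M[F]_(k, p)) : W *m adj W = 0 -> W = 0.
Proof.
move=> H; apply/matrixP=> i j; rewrite mxE.
have /matrixP/(_ i i) := H; rewrite !mxE => Hs.
have Hs' : \sum_(j0 | true) `|W i j0| ^+ 2 = 0.
  by rewrite -{}[RHS]Hs; apply: eq_bigr => l _; rewrite /Defs.adj !mxE cnorm.
have := @psumr_eq0P _ _ xpredT (fun l => `|W i l| ^+ 2) (fun l _ => exprn_ge0 2 (normr_ge0 (W i l))) Hs' j isT.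
by move/eqP; rewrite sqrf_eq0 normr_eq0 => /eqP.
Qed.

Lemma kill_row_free r p (M : 'M[F]_(r, p)) :
  (forall U : 'M[F]_r, U *m M = 0 -> U = 0) -> row_free M.
Proof. by move=> H; rewrite -kermx_eq0; apply/eqP/H; apply: mulmx_ker. Qed.

Lemma MMadj_unit r p (M : 'M[F]_(r, p)) : row_free M -> M *m adj M \in unitmx.
Proof.
move=> fM; rewrite -row_free_unit; apply: kill_row_free => U HU.
have : U *m M = 0.
  apply: WWadj0; rewrite adjM mulmxA -(mulmxA U) HU mul0mx //.
by move/eqP; rewrite mulmx_free_eq0 // => /eqP.
Qed.

Lemma MP_unique m (A B B' : 'M[F]_m) : is_MP c A B -> is_MP c A B' -> B = B'.
Proof.
case=> h1 h2 h3 h4 [g1 g2 g3 g4].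
have hA : adj A = adj A *m (A *m B') by rewrite -g3 -adjM g1.
have hA2 : adj A = B *m A *m adj A by rewrite -h4 -adjM mulmxA h1.
have E1 : B = B *m A *m B'.
  transitivity (B *m (adj B *m adj A)); first by rewrite -adjM h3 mulmxA h2.
  by rewrite hA (mulmxA (adj B)) -adjM h3 !mulmxA h2.
have E2 : B' = B *m A *m B'.
  transitivity (adj A *m adj B' *m B'); first by rewrite -adjM g4 g2.
  by rewrite hA2 -(mulmxA (B *m A)) -(mulmxA (B *m A)) -adjM g4 g2.
by rewrite E2.
Qed.

Lemma MP_exists m (A : 'M[F]_m) : exists B, is_MP c A B.
Proof.
set Fm := col_base A; set G := row_base A.
have fG : row_free G by apply: row_base_free.
have fF : row_free (adj Fm).
  by rewrite /row_free adj_rank; have := col_base_full A; rewrite /row_full.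
have eA : A = Fm *m G by rewrite mulmx_base.
clearbody Fm G.
have uG := MMadj_unit fG.
have uF := MMadj_unit fF. rewrite adjK in uF.
set U := invmx (G *m adj G); set V := invmx (adj Fm *m Fm).
have eG : G *m adj G *m U = 1%:M by rewrite mulmxV.
have eF : V *m (adj Fm *m Fm) = 1%:M by rewrite mulVmx.
have aU : adj U = U by rewrite adj_inv adjM adjK.
have aV : adj V = V by rewrite adj_inv adjM adjK.
exists (adj G *m U *m V *m adj Fm).
have AB : A *m (adj G *m U *m V *m adj Fm) = Fm *m V *m adj Fm.
  have k : Fm *m G *m (adj G *m U *m V *m adj Fm) = Fm *m V *m adj Fm.
    by rewrite !mulmxA -(mulmxA Fm G) -(mulmxA Fm (G *m adj G)) eG mulmx1.
  by rewrite -eA in k.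
have BA : (adj G *m U *m V *m adj Fm) *m A = adj G *m U *m G.
  have k : (adj G *m U *m V *m adj Fm) *m (Fm *m G) = adj G *m U *m G.
    by rewrite !mulmxA -(mulmxA _ (adj Fm) Fm) -(mulmxA _ V) eF mulmx1.
  by rewrite -eA in k.
split.
- have k : Fm *m V *m adj Fm *m (Fm *m G) = Fm *m G.
    by rewrite !mulmxA -(mulmxA _ (adj Fm) Fm) -(mulmxA _ V) eF mulmx1.
  by rewrite -eA in k; rewrite AB.
- by rewrite BA !mulmxA -(mulmxA _ G (adj G)) -(mulmxA _ (G *m adj G)) eG mulmx1.
- by rewrite AB !adjM adjK aV mulmxA.
- by rewrite BA !adjM adjK aU mulmxA.
Qed.

Section Phi.
Variable n : nat.
Local Notation J := (Jmx F n).
Local Notation Js := (adj (Jmx F n)).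
Local Notation K := (Kmx c n).
Local Notation Kinv := (invmx (Kmx c n)).

Lemma J_free : row_free J.
Proof.
apply: kill_row_free => U; rewrite /Jmx mul_mx_row mulmx1 -row_mx0.
by case/eq_row_mx.
Qed.

Lemma K_unit : K \in unitmx.
Proof. exact: MMadj_unit J_free. Qed.

Lemma rowJ l : \sum_j J l j = 0.
Proof.
rewrite big_split_ord /= big_ord1.
under eq_bigr do rewrite /Jmx row_mxEl.
rewrite /Jmx row_mxEr !mxE (bigD1 l) //= big1 => [|j /negbTE]; last first.
  by rewrite mxE eq_sym => ->.
by rewrite mxE eqxx addr0 subrr.
Qed.

Lemma inS_phi (X : 'M[F]_n) : inS (phi c X).
Proof.
split=> [i|j].
  under eq_bigr do rewrite /phi mxE.
  rewrite exchange_big /=; apply: big1 => l _.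
  by rewrite -mulr_sumr rowJ mulr0.
under eq_bigr do rewrite /phi mxE.
rewrite exchange_big /=; apply: big1 => l _.
under eq_bigr do rewrite mxE.
rewrite -mulr_suml exchange_big /= big1 ?mul0r // => k _.
rewrite -mulr_suml.
have -> : \sum_(i < n + 1) Js i k = 0.
  have e : forall i, Js i k = c (J k i).
    by move=> i; rewrite /Defs.adj [LHS]mxE [in X in c X]mxE.
  by under eq_bigr do rewrite e; rewrite -rmorph_sum rowJ rmorph0.
by rewrite mul0r.
Qed.

Lemma phi_mul (X Y : 'M[F]_n) : phi c X *m phi c Y = phi c (twprod c X Y).
Proof. by rewrite /phi /twprod /Kmx !mulmxA. Qed.

Lemma phiK (X : 'M[F]_n) : Kinv *m J *m phi c X *m Js *m Kinv = X.
Proof.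
rewrite /phi !mulmxA -(mulmxA Kinv J Js).
have -> : J *m Js = K by [].
rewrite mulVmx ?K_unit // mul1mx -(mulmxA X J Js).
have -> : J *m Js = K by [].
by rewrite mulmxK ?K_unit.
Qed.

Lemma phi_inj (X Y : 'M[F]_n) : phi c X = phi c Y -> X = Y.
Proof. by move=> H; rewrite -(phiK X) H phiK. Qed.

Lemma adj_phi (X : 'M[F]_n) : adj (phi c X) = phi c (adj X).
Proof. by rewrite /phi !adjM adjK mulmxA. Qed.

Lemma PJs : Js *m Kinv *m J *m Js = Js.
Proof.
rewrite -mulmxA; have -> : J *m Js = K by [].
by rewrite mulmxKV ?K_unit.
Qed.

Lemma JP : J *m (Js *m (Kinv *m J)) = J.
Proof.
rewrite !mulmxA; have -> : J *m Js = K by [].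
by rewrite mulmxV ?K_unit // mul1mx.
Qed.

Lemma PA (Z : 'M[F]_n) : Js *m Kinv *m J *m phi c Z = phi c Z.
Proof. by rewrite /phi !mulmxA PJs. Qed.

Lemma AP (Z : 'M[F]_n) : phi c Z *m (Js *m Kinv *m J) = phi c Z.
Proof. by rewrite /phi -!mulmxA JP. Qed.

Lemma main (X Y : 'M[F]_n) :
  (is_circ_pinv c X Y <-> inS (phi c Y) /\ is_pinv (phi c X) (phi c Y)) /\
  (is_circ_MP c X Y <-> is_MP c (phi c X) (phi c Y)) /\
  (exists Xo : 'M[F]_n, is_circ_MP c X Xo /\
     forall B : 'M[F]_(n + 1), is_MP c (phi c X) B ->
       inS B /\ B = phi c Xo).
Proof.
have MPeq : forall Y : 'M[F]_n, is_circ_MP c X Y <-> is_MP c (phi c X) (phi c Y).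
  move=> Z; rewrite /is_circ_MP /is_MP !phi_mul !adj_phi.
  split; case=> a b d e; split; try by rewrite ?a ?b ?d ?e.
  1-4: by apply: phi_inj.
split.
  rewrite /is_circ_pinv /is_pinv !phi_mul; split.
    by move=> H; split; [exact: inS_phi | rewrite H].
  by case=> _ /phi_inj.
split; first exact: MPeq.
have [B0 hB0] := MP_exists (phi c X).
have [h1 h2 h3 h4] := hB0.
have hB : B0 = B0 *m adj B0 *m adj (phi c X).
  by rewrite -mulmxA -adjM h3 mulmxA h2.
have hB' : B0 = adj (phi c X) *m adj B0 *m B0.
  by rewrite -adjM h4 h2.
have B0P : B0 *m (Js *m Kinv *m J) = B0.
  by rewrite {1}hB -mulmxA adj_phi AP -adj_phi -hB.
have PB0 : Js *m Kinv *m J *m B0 = B0.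
  by rewrite {1}hB' adj_phi (mulmxA _ _ B0) (mulmxA _ (phi c (adj X))) PA -adj_phi -hB'.
rewrite !mulmxA in B0P.
exists (Kinv *m J *m B0 *m Js *m Kinv).
have E : phi c (Kinv *m J *m B0 *m Js *m Kinv) = B0.
  by rewrite /phi !mulmxA PB0 B0P.
split; first by apply/MPeq; rewrite E.
move=> B hB1; have -> := MP_unique hB1 hB0.
by rewrite E; split=> //; have := inS_phi (Kinv *m J *m B0 *m Js *m Kinv); rewrite E.
Qed.

End Phi.

End Gen.

Theorem theorem3 :
  (forall (F : realFieldType) (n : nat) (X Y : 'M[F]_n),
     let c := (fun x : F => x) in
     (is_circ_pinv c X Y <->
        inS (phi c Y) /\ is_pinv (phi c X) (phi c Y)) /\
     (is_circ_MP c X Y <-> is_MP c (phi c X) (phi c Y)) /\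
     (exists Xo : 'M[F]_n, is_circ_MP c X Xo /\
        forall B : 'M[F]_(n + 1), is_MP c (phi c X) B ->
          inS B /\ B = phi c Xo))
  /\
  (forall (F : numClosedFieldType) (n : nat) (X Y : 'M[F]_n),
     let c := (fun x : F => x^*) in
     (is_circ_pinv c X Y <->
        inS (phi c Y) /\ is_pinv (phi c X) (phi c Y)) /\
     (is_circ_MP c X Y <-> is_MP c (phi c X) (phi c Y)) /\
     (exists Xo : 'M[F]_n, is_circ_MP c X Xo /\
        forall B : 'M[F]_(n + 1), is_MP c (phi c X) B ->
          inS B /\ B = phi c Xo)).
Proof.
split.
  move=> F n X Y c.
  have cK : involutive (idfun : {rmorphism F -> F}) by [].
  have cn : forall x : F, x * (idfun : {rmorphism F -> F}) x = `|x| ^+ 2.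
    by move=> x; rewrite real_normK ?num_real // expr2.
  exact: (main cK cn X Y).
move=> F n X Y c.
have cK : involutive (Num.conj : {rmorphism F -> F}) by exact: conjCK.
have cn : forall x : F, x * (Num.conj : {rmorphism F -> F}) x = `|x| ^+ 2.
  by move=> x; rewrite normCK.
exact: (main cK cn X Y).
Qed.
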